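(* For $w\in(0,\infty)$ let $$Q_{0,w}(x)=s_*\frac{w}{3+w}\frac{1}{r^3}\Big(e_r\otimes e_r-\tfrac13I\Big)+s_*\Big(1-\frac{w}{1+w}\frac1r\Big)\Big(e_z\otimes e_z-\tfrac13I\Big),\quad r=|x|>1,$$ and let $U_w=\{x\in\Omega\setminus\mathbb Re_z: Q_{0,w}(x)\text{ is uniaxial}\}$, where $\Omega=\{|x|>1\}$. If $w>\sqrt3$, then $$U_w=\{(x_1,x_2,0):x_1^2+x_2^2=r_w^2\},$$ where $r_w$ is the unique solution $r>1$ of $r^3-\frac{w}{1+w}r^2-\frac{w}{3+w}=0$. The function $w\mapsto r_w$ is increasing on $(\sqrt3,\infty)$, with $r_w\to1$ as $w\downarrow\sqrt3$ and $r_w\to r_\infty$ as $w\to\infty$, where $r_\infty>1$ is the root of $r^3-r^2-1=0$ ($r_\infty\approx1.47$). If $w\le\sqrt3$, then $U_w=\emptyset$.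
   Context: $s_*>0$ is a fixed constant, $e_r=x/|x|$, $e_z=(0,0,1)$. A matrix $Q\in\mathcal S_0$ (real symmetric traceless $3\times 3$) is uniaxial if it has two equal eigenvalues. *)

(* Defs.v *)
From Stdlib Require Import Reals Lra.
Open Scope R_scope.

(* 3x3 real matrices, indices 0,1,2 *)
Definition Mat3 := nat -> nat -> R.

Definition kron (i j : nat) : R := if Nat.eqb i j then 1 else 0.

Definition det3 (A : Mat3) : R :=
  A 0%nat 0%nat * (A 1%nat 1%nat * A 2%nat 2%nat - A 1%nat 2%nat * A 2%nat 1%nat)
  - A 0%nat 1%nat * (A 1%nat 0%nat * A 2%nat 2%nat - A 1%nat 2%nat * A 2%nat 0%nat)
  + A 0%nat 2%nat * (A 1%nat 0%nat * A 2%nat 1%nat - A 1%nat 1%nat * A 2%nat 0%nat).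

Definition charpoly3 (A : Mat3) (t : R) : R :=
  det3 (fun i j => t * kron i j - A i j).

(* uniaxial: two equal eigenvalues (counted with multiplicity), i.e. the
   characteristic polynomial has a repeated root *)
Definition uniaxial (A : Mat3) : Prop :=
  exists a b : R, forall t : R, charpoly3 A t = (t - a) ^ 2 * (t - b).

Definition vec3 (x1 x2 x3 : R) (i : nat) : R :=
  match i with 0%nat => x1 | 1%nat => x2 | _ => x3 end.

Definition ez (i : nat) : R := vec3 0 0 1 i.

Definition norm3 (x1 x2 x3 : R) : R := sqrt (x1 ^ 2 + x2 ^ 2 + x3 ^ 2).

Definition Q0 (s w x1 x2 x3 : R) : Mat3 :=
  let r := norm3 x1 x2 x3 in
  fun i j =>
    s * (w / (3 + w)) * (1 / r ^ 3)
      * ((vec3 x1 x2 x3 i / r) * (vec3 x1 x2 x3 j / r) - kron i j / 3)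
    + s * (1 - (w / (1 + w)) * (1 / r)) * (ez i * ez j - kron i j / 3).

Definition U (s w x1 x2 x3 : R) : Prop :=
  1 < norm3 x1 x2 x3 /\ ~ (x1 = 0 /\ x2 = 0) /\ uniaxial (Q0 s w x1 x2 x3).

Definition cubic_w (w r : R) : R := r ^ 3 - (w / (1 + w)) * r ^ 2 - w / (3 + w).

(* Main.v *)
Require Import Defs.
From Stdlib Require Import Reals Lra Psatz ClassicalEpsilon FunctionalExtensionality.
Open Scope R_scope.

Definition M (a b u1 u2 u3 : R) : Mat3 := fun i j =>
  a * (vec3 u1 u2 u3 i * vec3 u1 u2 u3 j - kron i j / 3) + b * (ez i * ez j - kron i j / 3).

Lemma cpM a b u1 u2 u3 t :
  charpoly3 (M a b u1 u2 u3) t =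
  let tt := t + (a+b)/3 in let S := u1^2+u2^2+u3^2 in
  tt^3 - (a*S+b)*tt^2 + a*b*(S-u3^2)*tt.
Proof. unfold charpoly3, det3, M, ez, kron; simpl. field. Qed.

Lemma coef3 c2 c1 c0 d2 d1 d0 :
  (forall x, x^3 + c2*x^2 + c1*x + c0 = x^3 + d2*x^2 + d1*x + d0) ->
  c2 = d2 /\ c1 = d1 /\ c0 = d0.
Proof.
  intro H. pose proof (H 0) as H0. pose proof (H 1) as H1. pose proof (H (-1)) as H2.
  simpl in *. lra.
Qed.

Lemma uni_char a b u1 u2 u3 : 0 < a -> 0 < b -> u1^2+u2^2+u3^2 = 1 -> 0 < u1^2+u2^2 ->
  (uniaxial (M a b u1 u2 u3) <-> (u3 = 0 /\ a = b)).
Proof.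
  intros Ha Hb HS Hk. unfold uniaxial. split.
  - intros [al [be Hf]].
    assert (E : forall x, x^3 + (-(a+b))*x^2 + (a*b*(u1^2+u2^2))*x + 0 =
       x^3 + (-(2*(al+(a+b)/3)+(be+(a+b)/3)))*x^2 + ((al+(a+b)/3)^2 + 2*(al+(a+b)/3)*(be+(a+b)/3))*x
       + (-((al+(a+b)/3)^2*(be+(a+b)/3)))).
    { intro x. pose proof (Hf (x - (a+b)/3)) as H. rewrite cpM in H. cbv zeta in H.
      rewrite HS in H. replace (u1^2+u2^2) with (1 - u3^2) by lra. lra. }
    apply coef3 in E. destruct E as [E2 [E1 E0]].
    set (A := al + (a+b)/3) in *. set (B := be + (a+b)/3) in *.
    assert (A = 0 \/ B = 0) as [HA|HB].
    { assert (A^2*B = 0) as HAB by lra. apply Rmult_integral in HAB.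
      destruct HAB as [HAB|HAB]; [left; nra|right; auto]. }
    + rewrite HA in E1. exfalso. assert (0 < a*b*(u1^2+u2^2)) by (apply Rmult_lt_0_compat; [apply Rmult_lt_0_compat|]; auto). simpl in E1. lra.
    + rewrite HB in E1, E2.
      assert (HAe : A = (a+b)/2) by lra.
      rewrite HAe in E1.
      assert (Hd : (a-b)^2 + 4*a*b*u3^2 = 0).
      { replace ((a-b)^2 + 4*a*b*u3^2) with (4*((a+b)/2)^2 - 4*(a*b*(1-u3^2))) by field.
        replace (1 - u3^2) with (u1^2+u2^2) by lra. rewrite E1. ring. }
      assert (Hab : 0 < a*b) by (apply Rmult_lt_0_compat; auto).
      assert (H1 : 0 <= (a-b)^2) by (apply pow2_ge_0).
      assert (H2 : 0 <= u3^2) by (apply pow2_ge_0).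
      assert (H3 : 0 <= a*b*u3^2) by (apply Rmult_le_pos; lra).
      replace (4*a*b*u3^2) with (4*(a*b*u3^2)) in Hd by ring.
      apply Rplus_eq_R0 in Hd; [|lra|lra]. destruct Hd as [D1 D2].
      split.
      * assert (a*b*u3^2 = 0) as D3 by lra. apply Rmult_integral in D3.
        destruct D3 as [D3|D3]; [lra|]. nra.
      * nra.
  - intros [H3 Hab]. subst u3 b. exists (a/3), (-(2*a/3)). intro t.
    rewrite cpM. cbv zeta. replace (u1^2+u2^2+0^2) with 1 by lra. field.
Qed.

Lemma pq_facts w : 0 < w -> 0 < w/(1+w) < 1 /\ 0 < w/(3+w) < 1.
Proof.
  intro Hw. split; split.
  - apply Rdiv_lt_0_compat; lra.
  - apply (Rmult_lt_reg_r (1+w)); [lra|]. field_simplify; lra.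
  - apply Rdiv_lt_0_compat; lra.
  - apply (Rmult_lt_reg_r (3+w)); [lra|]. field_simplify; lra.
Qed.

Lemma cubic_incr w r1 r2 : 0 < w -> 1 <= r1 -> r1 < r2 -> cubic_w w r1 < cubic_w w r2.
Proof.
  intros Hw H1 H2. destruct (pq_facts w Hw) as [[p0 p1] _].
  unfold cubic_w. set (p := w/(1+w)) in *. set (q := w/(3+w)).
  assert (F : 0 < r2^2 + r1*r2 + r1^2 - p*(r1+r2)) by nra.
  assert (0 < (r2 - r1) * (r2^2 + r1*r2 + r1^2 - p*(r1+r2))) by (apply Rmult_lt_0_compat; lra).
  replace ((r2 - r1) * (r2^2 + r1*r2 + r1^2 - p*(r1+r2))) with
    ((r2^3 - p*r2^2 - q) - (r1^3 - p*r1^2 - q)) in H by ring. lra.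
Qed.

Lemma cubic_1 w : 0 < w -> cubic_w w 1 = (3 - w^2)/((1+w)*(3+w)).
Proof. intro. unfold cubic_w. field. lra. Qed.

Lemma sqrt3_facts : 0 < sqrt 3 /\ sqrt 3 * sqrt 3 = 3 /\ sqrt 3 < 2.
Proof.
  assert (H := sqrt_sqrt 3 ltac:(lra)). assert (H0 := sqrt_lt_R0 3 ltac:(lra)).
  split; [auto|split; [auto|nra]].
Qed.

Lemma cubic_root_ex w : sqrt 3 < w -> exists r, 1 < r /\ r < 2 /\ cubic_w w r = 0.
Proof.
  intro Hw. destruct sqrt3_facts as [A [B C]].
  assert (Hw0 : 0 < w) by lra.
  destruct (pq_facts w Hw0) as [[p0 p1] [q0 q1]].
  assert (F1 : cubic_w w 1 < 0).
  { rewrite cubic_1 by lra. apply Rdiv_neg_pos; nra. }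
  assert (F2 : 0 < cubic_w w 2).
  { unfold cubic_w. nra. }
  destruct (IVT (cubic_w w) 1 2) as [z [[Hz1 Hz2] Hz]]; auto; try lra.
  { unfold cubic_w. intro x. reg. }
  exists z. split; [|split]; auto.
  - destruct (Req_dec z 1); [subst; lra| lra].
  - destruct (Req_dec z 2); [subst; lra| lra].
Qed.

Lemma Q0_M s w x1 x2 x3 : let r := norm3 x1 x2 x3 in
  Q0 s w x1 x2 x3 = M (s * (w / (3 + w)) * (1 / r ^ 3)) (s * (1 - (w / (1 + w)) * (1 / r)))
     (x1/r) (x2/r) (x3/r).
Proof.
  intro r. unfold Q0, M. fold r. extensionality i. extensionality j.
  assert (E : forall k, vec3 x1 x2 x3 k / r = vec3 (x1/r) (x2/r) (x3/r) k).
  { intro k. destruct k as [|[|k]]; reflexivity. }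
  rewrite !E. reflexivity.
Qed.

Lemma notboth x1 x2 : ~(x1 = 0 /\ x2 = 0) -> 0 < x1^2 + x2^2.
Proof.
  intro H. destruct (Req_dec x1 0); destruct (Req_dec x2 0); try tauto; nra.
Qed.

Lemma U_iff s w x1 x2 x3 : 0 < s -> 0 < w ->
  (U s w x1 x2 x3 <-> (1 < norm3 x1 x2 x3 /\ ~(x1 = 0 /\ x2 = 0) /\ x3 = 0 /\
                        cubic_w w (norm3 x1 x2 x3) = 0)).
Proof.
  intros Hs Hw. unfold U. rewrite Q0_M.
  set (r := norm3 x1 x2 x3).
  destruct (pq_facts w Hw) as [[p0 p1] [q0 q1]].
  split; intros [Hr [Hn H]]; split; auto; split; auto;
  (assert (Hr2 : r^2 = x1^2+x2^2+x3^2) by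
    (unfold r, norm3; rewrite pow2_sqrt; [auto| nra]));
  (assert (Hk := notboth x1 x2 Hn));
  (assert (Ha : 0 < s * (w / (3 + w)) * (1 / r ^ 3)) by
    (apply Rmult_lt_0_compat; [apply Rmult_lt_0_compat; lra| apply Rdiv_lt_0_compat; [lra| apply pow_lt; lra]]));
  (assert (Hb : 0 < s * (1 - (w / (1 + w)) * (1 / r))) by
    (apply Rmult_lt_0_compat; [lra|];
     assert (0 < 1/r < 1) by (split; [apply Rdiv_lt_0_compat; lra|
        apply (Rmult_lt_reg_r r); [lra|]; unfold Rdiv; rewrite Rmult_assoc, Rinv_l; lra]);
     nra));
  (assert (HS : (x1/r)^2 + (x2/r)^2 + (x3/r)^2 = 1) by (field_simplify; [|lra]; rewrite <- Hr2; field; lra));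
  (assert (HK : 0 < (x1/r)^2 + (x2/r)^2) by
     (replace ((x1/r)^2 + (x2/r)^2) with ((x1^2+x2^2)/r^2) by (field; lra);
      apply Rdiv_lt_0_compat; [lra| apply pow_lt; lra]));
  rewrite (uni_char _ _ _ _ _ Ha Hb HS HK) in *.
  - destruct H as [H3 Hab]. split.
    + apply (Rmult_eq_reg_r (/r)); [|apply Rinv_neq_0_compat; lra]. rewrite Rmult_0_l. exact H3.
    + unfold cubic_w. replace (r ^ 3 - w / (1 + w) * r ^ 2 - w / (3 + w)) with
        ((r^3/s) * (s * (1 - w / (1 + w) * (1 / r)) - s * (w / (3 + w)) * (1 / r ^ 3))) by (field; lra).
      rewrite Hab. ring.
  - destruct H as [H3 Hc]. split.
    + rewrite H3. field. lra.
    + unfold cubic_w in Hc.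
      assert (E : s * (1 - w/(1+w)*(1/r)) - s*(w/(3+w))*(1/r^3) = (s/r^3) * (r ^ 3 - w / (1 + w) * r ^ 2 - w / (3 + w))) by (field; lra).
      rewrite Hc in E. lra.
Qed.

Lemma cubic_uniq w r1 r2 : 0 < w -> 1 < r1 -> 1 < r2 -> cubic_w w r1 = 0 -> cubic_w w r2 = 0 -> r1 = r2.
Proof.
  intros Hw H1 H2 C1 C2. destruct (Rtotal_order r1 r2) as [h|[h|h]]; auto.
  - pose proof (cubic_incr w r1 r2 Hw ltac:(lra) h). lra.
  - pose proof (cubic_incr w r2 r1 Hw ltac:(lra) h). lra.
Qed.

Lemma cubic_pos w r : 0 < w -> w <= sqrt 3 -> 1 < r -> 0 < cubic_w w r.
Proof.
  intros Hw H Hr. destruct sqrt3_facts as [A [B C]].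
  assert (0 <= cubic_w w 1).
  { rewrite cubic_1 by lra. apply Rle_mult_inv_pos; [nra| apply Rmult_lt_0_compat; lra]. }
  pose proof (cubic_incr w 1 r Hw ltac:(lra) Hr). lra.
Qed.

Lemma ginf_ex : exists rinf, 1 < rinf /\ rinf < 2 /\ rinf ^ 3 - rinf ^ 2 - 1 = 0.
Proof.
  destruct (IVT (fun r => r ^ 3 - r ^ 2 - 1) 1 2) as [z [[Hz1 Hz2] Hz]]; simpl; try lra.
  { intro x. reg. }
  exists z. simpl in Hz.
  split; [|split]; simpl; try lra.
  - destruct (Req_dec z 1); [subst; lra| lra].
  - destruct (Req_dec z 2); [subst; lra| lra].
Qed.

Lemma ginf_gt1 r : r ^ 3 - r ^ 2 - 1 = 0 -> 1 < r.
Proof. intro H. destruct (Rle_lt_dec r 1); [|auto]. exfalso.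
  assert (0 <= r^2) by apply pow2_ge_0. assert (r^2*(r-1) <= 0) by nra. nra. Qed.

Theorem proposition3p1 (s : R) (hs : 0 < s) :
  (exists rw : R -> R,
     (forall w : R, sqrt 3 < w ->
        1 < rw w /\ cubic_w w (rw w) = 0 /\
        (forall r : R, 1 < r -> cubic_w w r = 0 -> r = rw w) /\
        (forall x1 x2 x3 : R,
           U s w x1 x2 x3 <-> (x3 = 0 /\ x1 ^ 2 + x2 ^ 2 = (rw w) ^ 2))) /\
     (forall w1 w2 : R, sqrt 3 < w1 -> w1 < w2 -> rw w1 < rw w2) /\
     (forall eps : R, 0 < eps -> exists delta : R, 0 < delta /\
        forall w : R, sqrt 3 < w < sqrt 3 + delta -> Rabs (rw w - 1) < eps) /\
     (exists rinf : R, 1 < rinf /\ rinf ^ 3 - rinf ^ 2 - 1 = 0 /\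
        (forall r : R, r ^ 3 - r ^ 2 - 1 = 0 -> r = rinf) /\
        (forall eps : R, 0 < eps -> exists M : R,
           forall w : R, M < w -> Rabs (rw w - rinf) < eps))) /\
  (forall w : R, 0 < w -> w <= sqrt 3 ->
     forall x1 x2 x3 : R, ~ U s w x1 x2 x3).
Proof.
  destruct sqrt3_facts as [S0 [S1 S2]].
  split.
  2:{ intros w Hw Hle x1 x2 x3 HU. rewrite U_iff in HU by auto.
      destruct HU as [Hr [_ [_ Hc]]]. pose proof (cubic_pos w _ Hw Hle Hr). lra. }
  assert (Hex : forall w, exists r, sqrt 3 < w -> 1 < r /\ r < 2 /\ cubic_w w r = 0).
  { intro w. destruct (Rlt_dec (sqrt 3) w) as [h|h].
    - destruct (cubic_root_ex w h) as [r Hr]; exists r; auto.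
    - exists 0; intro; contradiction. }
  set (rw := fun w => proj1_sig (constructive_indefinite_description _ (Hex w))).
  assert (Hrw : forall w, sqrt 3 < w -> 1 < rw w /\ rw w < 2 /\ cubic_w w (rw w) = 0)
    by (intros w h; exact (proj2_sig (constructive_indefinite_description _ (Hex w)) h)).
  clearbody rw. exists rw.
  split; [|split; [|split]].
  - intros w Hw. destruct (Hrw w Hw) as [R1 [R2 R3]].
    assert (Hw0 : 0 < w) by lra.
    split; [auto|split; [auto|split]].
    + intros r Hr Hc. exact (cubic_uniq w r (rw w) Hw0 Hr R1 Hc R3).
    + intros x1 x2 x3. rewrite U_iff by auto. split.
      * intros [Hr [Hn [H3 Hc]]]. split; auto.
        pose proof (cubic_uniq w _ (rw w) Hw0 Hr R1 Hc R3) as E.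
        rewrite <- E. unfold norm3. rewrite pow2_sqrt by nra. subst x3. ring.
      * intros [H3 H12]. subst x3.
        assert (E : norm3 x1 x2 0 = rw w).
        { unfold norm3. replace (x1 ^ 2 + x2 ^ 2 + 0 ^ 2) with (rw w ^ 2) by (rewrite <- H12; ring).
          apply sqrt_pow2; lra. }
        rewrite E. split; [auto|split; [|split; auto]].
        intros [h1 h2]. subst. nra.
  - intros w1 w2 H1 H12.
    destruct (Hrw w1 H1) as [A1 [A2 A3]]. destruct (Hrw w2 ltac:(lra)) as [B1 [B2 B3]].
    assert (p12 : w1/(1+w1) < w2/(1+w2)).
    { apply (Rmult_lt_reg_r ((1+w1)*(1+w2))); [apply Rmult_lt_0_compat; lra|].
      replace (w1/(1+w1)*((1+w1)*(1+w2))) with (w1*(1+w2)) by (field; lra).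
      replace (w2/(1+w2)*((1+w1)*(1+w2))) with (w2*(1+w1)) by (field; lra). nra. }
    assert (q12 : w1/(3+w1) < w2/(3+w2)).
    { apply (Rmult_lt_reg_r ((3+w1)*(3+w2))); [apply Rmult_lt_0_compat; lra|].
      replace (w1/(3+w1)*((3+w1)*(3+w2))) with (w1*(3+w2)) by (field; lra).
      replace (w2/(3+w2)*((3+w1)*(3+w2))) with (w2*(3+w1)) by (field; lra). nra. }
    assert (F : cubic_w w2 (rw w1) < 0).
    { unfold cubic_w in *. assert (0 < rw w1 ^2) by nra. nra. }
    destruct (Rtotal_order (rw w1) (rw w2)) as [h|[h|h]]; auto.
    + rewrite h in F. lra.
    + pose proof (cubic_incr w2 (rw w2) (rw w1) ltac:(lra) ltac:(lra) h). lra.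
  - intros eps Heps. exists (Rmin 1 (eps/5)). split.
    { apply Rmin_pos; lra. }
    intros w [Hw1 Hw2].
    assert (Hd1 := Rmin_l 1 (eps/5)). assert (Hd2 := Rmin_r 1 (eps/5)).
    destruct (Hrw w Hw1) as [R1 [R2 R3]].
    assert (Hw0 : 0 < w) by lra.
    destruct (pq_facts w Hw0) as [[p0 p1] [q0 q1]].
    assert (K : rw w - 1 <= - cubic_w w 1).
    { unfold cubic_w in *. set (p := w/(1+w)) in *. set (q := w/(3+w)) in *. set (r := rw w) in *.
      assert (E : (r^3 - p*r^2 - q) - (1^3 - p*1^2 - q) = (r-1)*(r^2+r+1-p*(r+1))) by ring.
      assert ((r-1)*1 <= (r-1)*(r^2+r+1-p*(r+1))) by (apply Rmult_le_compat_l; nra). lra. }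
    rewrite cubic_1 in K by lra.
    assert (K2 : (3 - w^2)/((1+w)*(3+w)) * ((1+w)*(3+w)) = 3 - w^2) by (field; lra).
    assert (K3 : - ((3 - w^2)/((1+w)*(3+w))) <= w^2 - 3).
    { assert (w^2 - 3 > 0) by nra. assert (1 <= (1+w)*(3+w)) by nra. nra. }
    rewrite Rabs_pos_eq by lra. nra.
  - destruct ginf_ex as [ri [I1 [I2 I3]]]. exists ri. split; [auto|split; [auto|split]].
    + intros r Hr. pose proof (ginf_gt1 r Hr).
      destruct (Rtotal_order r ri) as [h|[h|h]]; auto; exfalso.
      * assert (0 < (ri - r)*(ri^2 + ri*r + r^2 - ri - r)) by (apply Rmult_lt_0_compat; nra). nra.
      * assert (0 < (r - ri)*(ri^2 + ri*r + r^2 - ri - r)) by (apply Rmult_lt_0_compat; nra). nra.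
    + intros eps Heps. exists (7/eps + 2). intros w Hw.
      assert (HwE : w * eps > 7).
      { assert (w*eps > (7/eps+2)*eps) by (apply Rmult_lt_compat_r; lra).
        replace ((7/eps+2)*eps) with (7 + 2*eps) in H by (field; lra). lra. }
      assert (Hw3 : sqrt 3 < w). { assert (0 < 7/eps) by (apply Rdiv_lt_0_compat; lra). lra. }
      destruct (Hrw w Hw3) as [R1 [R2 R3]].
      assert (Hw0 : 0 < w) by lra.
      set (r := rw w) in *.
      set (y := /(1+w)). set (z := /(3+w)).
      assert (Hy : (1+w)*y = 1) by (unfold y; field; lra).
      assert (Hz : (3+w)*z = 1) by (unfold z; field; lra).
      assert (y0 : 0 < y) by (unfold y; apply Rinv_0_lt_compat; lra).
      assert (z0 : 0 < z) by (unfold z; apply Rinv_0_lt_compat; lra).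
      assert (Gdef : r^3 - r^2 - 1 = -(r^2*y + 3*z)).
      { unfold cubic_w in R3. replace (w/(1+w)) with (w*y) in R3 by (unfold y; field; lra).
        replace (w/(3+w)) with (w*z) in R3 by (unfold z; field; lra). nra. }
      assert (Gw : (r^2*y + 3*z) * w < 7).
      { assert (y*w < 1) by nra. assert (z*w < 1) by nra. assert (r^2 < 4) by nra. nra. }
      assert (G : r^2*y + 3*z < eps) by nra.
      assert (Gp : 0 < r^2*y + 3*z) by nra.
      set (D := r - ri). set (F := r^2 + r*ri + ri^2 - r - ri).
      assert (F1 : 1 <= F) by (unfold F; nra).
      assert (DF : D*F = -(r^2*y + 3*z)) by (unfold D, F; nra).
      assert (Dn : D < 0) by nra.
      assert (D*F <= D) by nra.
      rewrite Rabs_left by (fold D; lra). fold D. lra.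
Qed.
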